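(* Let $U^*(\beta,T_1,T_2)$ denote a maximizer over $U\in\{0,1,\dots,N_1-1\}$ of $c^{\mathrm{ub}}(U,T_1,T_2)\beta^{-2/\max\{\alpha_1,\alpha_2\}}$ when $\alpha_1\ne\alpha_2$, and of $(\mathcal A_1c_1(U,T_1,T_2)+\mathcal A_2c_2(T_1,T_2))\beta^{-2/\alpha}$ when $\alpha_1=\alpha_2=\alpha$. Then for arbitrary $\alpha_1,\alpha_2>2$ there exists $\underline\beta<\infty$ such that for all $\beta>\underline\beta$, $U^*(\beta,T_1,T_2)=0$ (i.e. $U=0$ attains the maximum).
   Context: Parameters: integers $N_1>N_2\ge1$, $P_1,P_2>0$, $\alpha_1,\alpha_2>2$, $\lambda_1,\lambda_2>0$, $T_1,T_2\ge1$; $U\in\{0,\dots,N_1-1\}$. $\mathcal A_1=2\pi\lambda_1\int_0^\infty z e^{-\pi\lambda_1z^2}\exp(-\pi\lambda_2(P_2/P_1)^{2/\alpha_2}z^{2\alpha_1/\alpha_2})dz$, $\mathcal A_2=2\pi\lambda_2\int_0^\infty z e^{-\pi\lambda_2z^2}\exp(-\pi\lambda_1(P_1/P_2)^{2/\alpha_1}z^{2\alpha_2/\alpha_1})dz$, $f_{Y_1}(y)=\frac{2\pi\lambda_1}{\mathcal A_1}y\exp(-\pi(\lambda_1y^2+\lambda_2(P_2/P_1)^{2/\alpha_2}y^{2\alpha_1/\alpha_2}))$, $f_{Y_2}(y)=\frac{2\pi\lambda_2}{\mathcal A_2}y\exp(-\pi(\lambda_1(P_1/P_2)^{2/\alpha_1}y^{2\alpha_2/\alpha_1}+\lambda_2y^2))$;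 $\bar L_j(T_j)=2\pi\lambda_j\int_0^\infty r\int_{(P_j/(P_1T_j))^{1/\alpha_j}r^{\alpha_1/\alpha_j}}^{(P_j/P_1)^{1/\alpha_j}r^{\alpha_1/\alpha_j}}f_{Y_j}(y)dy\,dr$, $\bar L=\bar L_1(T_1)+\bar L_2(T_2)$; $\Pr(u_{\mathrm{IN},0}=u)=e^{-\bar L}\bar L^u/u!$ for $0\le u<U$ and $\sum_{k\ge U}e^{-\bar L}\bar L^k/k!$ for $u=U$. $B(a,b)=\int_0^1t^{a-1}(1-t)^{b-1}dt$; $\mathcal M_n=\{(m_a)_{a=1}^n\in\mathbb N_0^n:\sum_aa\,m_a=n\}$. In all sums below, $\sum$ over $n_2$ runs from $0$ to $n$, $(p_a)\in\mathcal M_{n_2}$, $(q_a)\in\mathcal M_{n-n_2}$, and $P:=\sum_ap_a$, $Q:=\sum_aq_a$. $\eta_1(U,T_1,T_2)=\frac{\pi\lambda_1}{\mathcal A_1}\sum_{u=0}^U\Pr(u_{\mathrm{IN},0}=u)\sum_{n=0}^{N_1-u-1}\frac1{n!}\sum\binom n{n_2}\frac{n_2!}{\prod p_a!}\frac{(n-n_2)!}{\prod q_a!}\prod_{a=1}^{n_2}\big(\frac{2\pi\lambda_1}{\alpha_1}B(1+\frac2{\alpha_1},a-\frac2{\alpha_1})\big)^{p_a}\prod_{a=1}^{n-n_2}\big(\frac{2\pi\lambda_2}{\alpha_2}(\frac{P_2}{P_1})^{2/\alpha_2}B(1+\frac2{\alpha_2},a-\frac2{\alpha_2})\big)^{q_a}\big(\frac{2\pi\lambda_1}{\alpha_1}B(\frac2{\alpha_1},1-\frac2{\alpha_1})\big)^{-P-\frac{\alpha_1}{\alpha_2}Q-1}\Gamma(P+\frac{\alpha_1}{\alpha_2}Q+1)$.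 $\eta_2=\frac{\pi\lambda_2}{\mathcal A_2}\sum_{n=0}^{N_2-1}\frac1{n!}\sum\binom n{n_2}\frac{n_2!}{\prod p_a!}\frac{(n-n_2)!}{\prod q_a!}\prod_{a=1}^{n_2}\big(\frac{2\pi\lambda_1}{\alpha_1}(\frac{P_1}{P_2})^{2/\alpha_1}B(1+\frac2{\alpha_1},a-\frac2{\alpha_1})\big)^{p_a}\prod_{a=1}^{n-n_2}\big(\frac{2\pi\lambda_2}{\alpha_2}B(1+\frac2{\alpha_2},a-\frac2{\alpha_2})\big)^{q_a}\big(\frac{2\pi\lambda_1}{\alpha_2}B(\frac2{\alpha_2},1-\frac2{\alpha_2})\big)^{-\frac{\alpha_2}{\alpha_1}P-Q-1}\Gamma(\frac{\alpha_2}{\alpha_1}P+Q+1)$ (independent of $U$). $c^{\mathrm{ub}}(U,T_1,T_2)=\eta_1(U,T_1,T_2)$ if $\alpha_1>\alpha_2$ and $\eta_2$ if $\alpha_1<\alpha_2$. When $\alpha_1=\alpha_2=\alpha$: $c_1(U,T_1,T_2)=\frac{\pi\lambda_1}{\mathcal A_1}\sum_{u=0}^U\Pr(u_{\mathrm{IN},0}=u)\sum_{n=0}^{N_1-u-1}\frac1{n!}\sum\binom n{n_2}\frac{n_2!}{\prod p_a!}\frac{(n-n_2)!}{\prod q_a!}\prod_{a=1}^{n_2}\big(\frac{2\pi\lambda_1}{\alpha}B(1+\frac2\alpha,a-\frac2\alpha)\big)^{p_a}\prod_{a=1}^{n-n_2}\big(\frac{2\pi\lambda_2}{\alpha}(\frac{P_2}{P_1})^{2/\alpha}B(1+\frac2\alpha,a-\frac2\alpha)\big)^{q_a}\big(\frac{2\pi}{\alpha}(\lambda_1+\lambda_2(\frac{P_2}{P_1})^{2/\alpha})B(\frac2\alpha,1-\frac2\alpha)\big)^{-P-Q-1}\Gamma(P+Q+1)$,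 and $c_2(T_1,T_2)=\frac{\pi\lambda_2}{\mathcal A_2}\sum_{n=0}^{N_2-1}\frac1{n!}\sum\binom n{n_2}\frac{n_2!}{\prod p_a!}\frac{(n-n_2)!}{\prod q_a!}\prod_{a=1}^{n_2}\big(\frac{2\pi\lambda_1}{\alpha}(\frac{P_1}{P_2})^{2/\alpha}B(1+\frac2\alpha,a-\frac2\alpha)\big)^{p_a}\prod_{a=1}^{n-n_2}\big(\frac{2\pi\lambda_2}{\alpha}B(1+\frac2\alpha,a-\frac2\alpha)\big)^{q_a}\big(\frac{2\pi}{\alpha}(\lambda_1(\frac{P_1}{P_2})^{2/\alpha}+\lambda_2)B(\frac2\alpha,1-\frac2\alpha)\big)^{-P-Q-1}\Gamma(P+Q+1)$. (These are the coefficients of the high-SIR-threshold asymptotic coverage probability, or of its upper bound, for a user-centric interference-nulling scheme with maximum nulling degrees of freedom $U$.) *)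

(* Defs.v *)
From HB Require Import structures.
From mathcomp Require Import all_boot all_order all_algebra.
From mathcomp Require Import all_classical all_reals all_analysis.
Set Implicit Arguments. Unset Strict Implicit. Unset Printing Implicit Defensive.
Import Order.TTheory GRing.Theory Num.Theory.
Import numFieldNormedType.Exports.
Local Open Scope classical_set_scope.
Local Open Scope ring_scope.

Section Defs.
Variable R : realType.

Definition rint (D : set R) (f : R -> R) : R :=
  \int[lebesgue_measure]_(x in D) f x.

Definition Gammaf (s : R) : R :=
  rint `]0, +oo[ (fun t => t `^ (s - 1) * expR (- t)).
Definition Betaf (a b : R) : R :=
  rint `]0, 1[ (fun t => t `^ (a - 1) * (1 - t) `^ (b - 1)).

Definition A1 (P1 P2 al1 al2 lam1 lam2 : R) : R :=
  2 * pi * lam1 * rint `[0, +oo[ (fun z =>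
    z * expR (- pi * lam1 * z ^+ 2)
      * expR (- pi * lam2 * (P2 / P1) `^ (2 / al2) * z `^ (2 * al1 / al2))).
Definition A2 (P1 P2 al1 al2 lam1 lam2 : R) : R :=
  2 * pi * lam2 * rint `[0, +oo[ (fun z =>
    z * expR (- pi * lam2 * z ^+ 2)
      * expR (- pi * lam1 * (P1 / P2) `^ (2 / al1) * z `^ (2 * al2 / al1))).

Definition fY1 (P1 P2 al1 al2 lam1 lam2 : R) (y : R) : R :=
  2 * pi * lam1 / A1 P1 P2 al1 al2 lam1 lam2 * y
  * expR (- pi * (lam1 * y ^+ 2 + lam2 * (P2 / P1) `^ (2 / al2) * y `^ (2 * al1 / al2))).
Definition fY2 (P1 P2 al1 al2 lam1 lam2 : R) (y : R) : R :=
  2 * pi * lam2 / A2 P1 P2 al1 al2 lam1 lam2 * y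
  * expR (- pi * (lam1 * (P1 / P2) `^ (2 / al1) * y `^ (2 * al2 / al1) + lam2 * y ^+ 2)).

Definition Lbarj (P1 al1 lamj Pj alj Tj : R) (fYj : R -> R) : R :=
  2 * pi * lamj * rint `[0, +oo[ (fun r =>
    r * rint `[(Pj / (P1 * Tj)) `^ (1 / alj) * r `^ (al1 / alj),
               (Pj / P1) `^ (1 / alj) * r `^ (al1 / alj)] fYj).

Definition Lbar (P1 P2 al1 al2 lam1 lam2 T1 T2 : R) : R :=
  Lbarj P1 al1 lam1 P1 al1 T1 (fY1 P1 P2 al1 al2 lam1 lam2)
  + Lbarj P1 al1 lam2 P2 al2 T2 (fY2 P1 P2 al1 al2 lam1 lam2).

(* Pr(u_{IN,0} = u), truncated Poisson with mean L at level U *)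
Definition poisson_pmf (L : R) (k : nat) : R := expR (- L) * L ^+ k / (k`!)%:R.
Definition PrIN (L : R) (U u : nat) : R :=
  if (u < U)%N then poisson_pmf L u
  else if u == U then fine (\sum_(U <= k <oo) (poisson_pmf L k)%:E)%E
  else 0.

End Defs.

(* M_n = {(m_a)_{a=1}^n in N_0^n : sum_a a m_a = n}; m : 'I_n -> 'I_n.+1,
   index i : 'I_n stands for a = i+1 (each m_a <= n automatically). *)
Definition inM (n : nat) (m : {ffun 'I_n -> 'I_n.+1}) : bool :=
  (\sum_(i < n) i.+1 * m i == n)%N.
Definition msum (n : nat) (m : {ffun 'I_n -> 'I_n.+1}) : nat := (\sum_(i < n) m i)%N.
Definition mfact (n : nat) (m : {ffun 'I_n -> 'I_n.+1}) : nat := (\prod_(i < n) (m i)`!)%N.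

Section Sums.
Variable R : realType.
Local Open Scope ring_scope.

Definition inner_sum (n : nat) (F1 F2 : nat -> R) (G : nat -> nat -> R) : R :=
  \sum_(n2 < n.+1)
   \sum_(p : {ffun 'I_n2 -> 'I_n2.+1} | inM p)
    \sum_(q : {ffun 'I_(n - n2) -> 'I_(n - n2).+1} | inM q)
      ('C(n, n2))%:R * ((n2`!)%:R / (mfact p)%:R)
      * (((n - n2)`!)%:R / (mfact q)%:R)
      * (\prod_(i < n2) F1 i.+1 ^+ p i)
      * (\prod_(i < n - n2) F2 i.+1 ^+ q i)
      * G (msum p) (msum q).

Definition eta1 (N1 : nat) (P1 P2 al1 al2 lam1 lam2 T1 T2 : R) (U : nat) : R :=
  pi * lam1 / A1 P1 P2 al1 al2 lam1 lam2 *
  \sum_(u < U.+1) PrIN (Lbar P1 P2 al1 al2 lam1 lam2 T1 T2) U u *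
   \sum_(n < N1 - u) (n`!)%:R^-1 *
    inner_sum n
      (fun a => 2 * pi * lam1 / al1 * Betaf (1 + 2 / al1) (a%:R - 2 / al1))
      (fun a => 2 * pi * lam2 / al2 * (P2 / P1) `^ (2 / al2)
                * Betaf (1 + 2 / al2) (a%:R - 2 / al2))
      (fun P Q => (2 * pi * lam1 / al1 * Betaf (2 / al1) (1 - 2 / al1))
                    `^ (- P%:R - al1 / al2 * Q%:R - 1)
                  * Gammaf (P%:R + al1 / al2 * Q%:R + 1)).

Definition eta2 (N2 : nat) (P1 P2 al1 al2 lam1 lam2 : R) : R :=
  pi * lam2 / A2 P1 P2 al1 al2 lam1 lam2 *
  \sum_(n < N2) (n`!)%:R^-1 *
    inner_sum n
      (fun a => 2 * pi * lam1 / al1 * (P1 / P2) `^ (2 / al1)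
                * Betaf (1 + 2 / al1) (a%:R - 2 / al1))
      (fun a => 2 * pi * lam2 / al2 * Betaf (1 + 2 / al2) (a%:R - 2 / al2))
      (fun P Q => (2 * pi * lam1 / al2 * Betaf (2 / al2) (1 - 2 / al2))
                    `^ (- (al2 / al1) * P%:R - Q%:R - 1)
                  * Gammaf (al2 / al1 * P%:R + Q%:R + 1)).

Definition cub (N1 N2 : nat) (P1 P2 al1 al2 lam1 lam2 T1 T2 : R) (U : nat) : R :=
  if al2 < al1 then eta1 N1 P1 P2 al1 al2 lam1 lam2 T1 T2 U
  else eta2 N2 P1 P2 al1 al2 lam1 lam2.

Definition c1 (N1 : nat) (P1 P2 al lam1 lam2 T1 T2 : R) (U : nat) : R :=
  pi * lam1 / A1 P1 P2 al al lam1 lam2 *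
  \sum_(u < U.+1) PrIN (Lbar P1 P2 al al lam1 lam2 T1 T2) U u *
   \sum_(n < N1 - u) (n`!)%:R^-1 *
    inner_sum n
      (fun a => 2 * pi * lam1 / al * Betaf (1 + 2 / al) (a%:R - 2 / al))
      (fun a => 2 * pi * lam2 / al * (P2 / P1) `^ (2 / al)
                * Betaf (1 + 2 / al) (a%:R - 2 / al))
      (fun P Q => (2 * pi / al * (lam1 + lam2 * (P2 / P1) `^ (2 / al))
                     * Betaf (2 / al) (1 - 2 / al))
                    `^ (- P%:R - Q%:R - 1)
                  * Gammaf (P%:R + Q%:R + 1)).

Definition c2 (N2 : nat) (P1 P2 al lam1 lam2 : R) : R :=
  pi * lam2 / A2 P1 P2 al al lam1 lam2 *
  \sum_(n < N2) (n`!)%:R^-1 *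
    inner_sum n
      (fun a => 2 * pi * lam1 / al * (P1 / P2) `^ (2 / al)
                * Betaf (1 + 2 / al) (a%:R - 2 / al))
      (fun a => 2 * pi * lam2 / al * Betaf (1 + 2 / al) (a%:R - 2 / al))
      (fun P Q => (2 * pi / al * (lam1 * (P1 / P2) `^ (2 / al) + lam2)
                     * Betaf (2 / al) (1 - 2 / al))
                    `^ (- P%:R - Q%:R - 1)
                  * Gammaf (P%:R + Q%:R + 1)).

Definition objective (N1 N2 : nat) (P1 P2 al1 al2 lam1 lam2 T1 T2 beta : R)
  (U : nat) : R :=
  if al1 != al2 then
    cub N1 N2 P1 P2 al1 al2 lam1 lam2 T1 T2 U * beta `^ (- (2 / Num.max al1 al2))
  else
    (A1 P1 P2 al1 al1 lam1 lam2 * c1 N1 P1 P2 al1 lam1 lam2 T1 T2 U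
     + A2 P1 P2 al1 al1 lam1 lam2 * c2 N2 P1 P2 al1 lam1 lam2)
    * beta `^ (- (2 / al1)).

End Sums.

(* Main.v *)
Require Import Defs.
From HB Require Import structures.
From mathcomp Require Import all_boot all_order all_algebra.
From mathcomp Require Import all_classical all_reals all_analysis.
Import Order.TTheory GRing.Theory Num.Theory.
Import numFieldNormedType.Exports.
Local Open Scope ring_scope.

Ltac pos := repeat first
  [ assumption | apply: mulr_ge0 | rewrite invr_ge0 | apply: powR_ge0 | apply: expR_ge0
  | apply: pi_ge0 | apply: ler0n | apply: ltW; assumption | assumption ].

Section Aux.
Variable R : realType.

Lemma pmf_ge0 (L : R) k : 0 <= L -> 0 <= Defs.poisson_pmf L k.
Proof.
move=> L0; rewrite /Defs.poisson_pmf divr_ge0 ?mulr_ge0 ?exprn_ge0 ?expR_ge0 //.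
Qed.

Lemma pmf_fin (L : R) : (\sum_(0 <= k <oo) (Defs.poisson_pmf L k)%:E)%E \is a fin_num.
Proof.
have cv : cvgn (series (Defs.poisson_pmf L)).
  have -> : series (Defs.poisson_pmf L) = ((fun=> expR (- L)) \* series (exp_coeff L)).
    apply/funext => n; rewrite /series /= mulr_sumr; apply: eq_bigr => k _.
    by rewrite /Defs.poisson_pmf /exp_coeff /= mulrA.
  apply: is_cvgM; [apply: is_cvg_cst| exact: is_cvg_series_exp_coeff].
rewrite (_ : (\sum_(0 <= k <oo) (Defs.poisson_pmf L k)%:E)%E = (limn (series (Defs.poisson_pmf L)))%:E) //.
rewrite -EFin_lim //.
have -> : (EFin \o series (Defs.poisson_pmf L)) = (fun n => \sum_(0 <= k < n) (Defs.poisson_pmf L k)%:E)%E.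
  by apply/funext => n; rewrite /series /= sumEFin.
by [].
Qed.

Lemma tail_split (L : R) (U : nat) : 0 <= L ->
  fine (\sum_(0 <= k <oo) (Defs.poisson_pmf L k)%:E)%E =
  \sum_(k < U) Defs.poisson_pmf L k + fine (\sum_(U <= k <oo) (Defs.poisson_pmf L k)%:E)%E.
Proof.
move=> L0.
have h := @nneseries_split R (fun k => (Defs.poisson_pmf L k)%:E) 0 U.
rewrite add0n in h.
have h' : forall k, (0 <= k)%N -> (0 <= (Defs.poisson_pmf L k)%:E)%E.
  by move=> k _; rewrite lee_fin pmf_ge0.
have e := h h'.
have fin := eq_rect _ (fun x => x \is a fin_num) (pmf_fin L) _ e.
move: fin; rewrite fin_numD => /andP[f1 f2].
rewrite (congr1 fine e) fineD //.
by rewrite sumEFin /= big_mkord.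
Qed.

Lemma sum_widen (t : nat -> R) m n : (forall i, 0 <= t i) -> (m <= n)%N ->
  \sum_(i < m) t i <= \sum_(i < n) t i.
Proof.
move=> t0 mn; rewrite -!(big_mkord xpredT) (@big_cat_nat _ _ _ m 0 n _ _ (leq0n m) mn) /=.
by rewrite lerDl sumr_ge0.
Qed.

Lemma key (L K : R) (N1 U : nat) (t : nat -> R) : 0 <= L -> 0 <= K ->
  (forall n, 0 <= t n) ->
  K * (\sum_(u < U.+1) PrIN L U u * \sum_(n < N1 - u) t n)
  <= K * (\sum_(u < 1) PrIN L 0 u * \sum_(n < N1 - u) t n).
Proof.
move=> L0 K0 t0; apply: ler_wpM2l => //.
rewrite big_ord1 /PrIN /= subn0 (@tail_split L U L0) mulrDl big_ord_recr /= ltnn eqxx.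
have S0 : forall u, 0 <= \sum_(n < N1 - u) t n by move=> u; apply: sumr_ge0.
have Sle : forall u, \sum_(n < N1 - u) t n <= \sum_(n < N1) t n.
  by move=> u; apply: sum_widen => //; apply: leq_subr.
apply: lerD.
  rewrite mulr_suml; apply: ler_sum => i _; rewrite ltn_ord.
by apply: ler_wpM2l => //; [exact: (pmf_ge0 L i L0)|exact: Sle].
apply: ler_wpM2l; last exact: Sle.
apply: (@fine_ge0 R); apply: nneseries_ge0 => k _ _; rewrite lee_fin; exact: pmf_ge0.
Qed.



Lemma rint_ge0 (D : set R) (f : R -> R) : (forall x, D x -> 0 <= f x) -> 0 <= rint D f.
Proof. by move=> h; rewrite /rint; apply: Rintegral_ge0. Qed.

Lemma Gammaf_ge0 (s : R) : 0 <= Gammaf s.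
Proof. by apply: rint_ge0 => x _; pos. Qed.

Lemma Betaf_ge0 (a b : R) : 0 <= Betaf a b.
Proof. by apply: rint_ge0 => x _; pos. Qed.

Lemma A1_ge0 (P1 P2 al1 al2 lam1 lam2 : R) : 0 <= lam1 -> 0 <= A1 P1 P2 al1 al2 lam1 lam2.
Proof.
move=> l1; rewrite /A1; pos; apply: rint_ge0 => z; rewrite /= in_itv /= andbT => z0; pos.
Qed.

Lemma A2_ge0 (P1 P2 al1 al2 lam1 lam2 : R) : 0 <= lam2 -> 0 <= A2 P1 P2 al1 al2 lam1 lam2.
Proof.
move=> l1; rewrite /A2; pos; apply: rint_ge0 => z; rewrite /= in_itv /= andbT => z0; pos.
Qed.

Lemma Lbarj_ge0 (P1 al1 lamj Pj alj Tj : R) (fYj : R -> R) : 0 <= lamj ->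
  (forall y, 0 <= y -> 0 <= fYj y) -> 0 <= Lbarj P1 al1 lamj Pj alj Tj fYj.
Proof.
move=> l0 f0; rewrite /Lbarj; pos; apply: rint_ge0 => r; rewrite /= in_itv /= andbT => r0.
pos; apply: rint_ge0 => y; rewrite /= in_itv /= => /andP[ay _]; apply: f0.
apply: le_trans ay; pos.
Qed.

Lemma Lbar_ge0 (P1 P2 al1 al2 lam1 lam2 T1 T2 : R) : 0 <= lam1 -> 0 <= lam2 ->
  0 <= Lbar P1 P2 al1 al2 lam1 lam2 T1 T2.
Proof.
move=> l1 l2; rewrite /Lbar; apply: addr_ge0; apply: Lbarj_ge0 => // y y0.
  by rewrite /fY1; have hA := @A1_ge0 P1 P2 al1 al2 lam1 lam2 l1; pos.
by rewrite /fY2; have hA := @A2_ge0 P1 P2 al1 al2 lam1 lam2 l2; pos.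
Qed.

Lemma inner_sum_ge0 n (F1 F2 : nat -> R) (G : nat -> nat -> R) :
  (forall a, 0 <= F1 a) -> (forall a, 0 <= F2 a) -> (forall p q, 0 <= G p q) ->
  0 <= inner_sum n F1 F2 G.
Proof.
move=> h1 h2 hG; rewrite /inner_sum; apply: sumr_ge0 => n2 _.
apply: sumr_ge0 => p _; apply: sumr_ge0 => q _.
pos; try (rewrite prodr_ge0 // => i _; rewrite exprn_ge0 //). exact: hG.
Qed.
End Aux.

Ltac pos2 := repeat match goal with
  | |- is_true (0 <= Betaf _ _) => apply: Betaf_ge0
  | |- is_true (0 <= Gammaf _) => apply: Gammaf_ge0
  | |- is_true (0 <= _ * _) => apply: mulr_ge0
  | |- is_true (0 <= _^-1) => rewrite invr_ge0
  | |- is_true (0 <= _ `^ _) => apply: powR_ge0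
  | |- is_true (0 <= pi) => apply: pi_ge0
  | |- is_true (0 <= _%:R) => apply: ler0n
  | H : is_true (0 <= ?y) |- is_true (0 <= ?x) => constr_eq x y; exact: H
  | H : is_true (0 < ?y) |- is_true (0 <= ?x) => constr_eq x y; exact: ltW H
  end.

Theorem lemma5 (R : realType) (N1 N2 : nat) (P1 P2 al1 al2 lam1 lam2 T1 T2 : R) :
  (N2 < N1)%N -> (1 <= N2)%N ->
  0 < P1 -> 0 < P2 -> 2 < al1 -> 2 < al2 -> 0 < lam1 -> 0 < lam2 ->
  1 <= T1 -> 1 <= T2 ->
  exists beta_low : R, forall beta : R, beta_low < beta ->
    forall U : nat, (U < N1)%N ->
      objective N1 N2 P1 P2 al1 al2 lam1 lam2 T1 T2 beta U
      <= objective N1 N2 P1 P2 al1 al2 lam1 lam2 T1 T2 beta 0.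
Proof.
move=> _ _ hP1 hP2 ha1 ha2 hl1 hl2 _ _.
have a1 : 0 < al1 by apply: lt_trans ha1.
have a2 : 0 < al2 by apply: lt_trans ha2.
have L0 := @Lbar_ge0 R P1 P2 al1 al2 lam1 lam2 T1 T2 (ltW hl1) (ltW hl2).
have L0' := @Lbar_ge0 R P1 P2 al1 al1 lam1 lam2 T1 T2 (ltW hl1) (ltW hl2).
have A10 := @A1_ge0 R P1 P2 al1 al2 lam1 lam2 (ltW hl1).
have A10' := @A1_ge0 R P1 P2 al1 al1 lam1 lam2 (ltW hl1).
exists 0 => beta _ U _; rewrite /objective.
case: ifP => _.
  apply: ler_wpM2r; first exact: powR_ge0.
  rewrite /cub; case: ifP => _ //.
  rewrite /eta1; apply: (@key R _ _ _ _ (fun n => n`!%:R^-1 * inner_sum n _ _ _)).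
  - exact: L0.
  - by pos2.
  - by move=> n; pos2; apply: inner_sum_ge0 => *; pos2.
apply: ler_wpM2r; first exact: powR_ge0.
rewrite lerD2r; apply: ler_wpM2l => //.
rewrite /c1; apply: (@key R _ _ _ _ (fun n => n`!%:R^-1 * inner_sum n _ _ _)).
- exact: L0'.
- by pos2.
- by move=> n; pos2; apply: inner_sum_ge0 => *; pos2.
Qed.
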